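(* Let $0=x_1<x_2<\dots<x_{K+1}=L$, and for each element $e^k=[x_k,x_{k+1}]$ let $\rho,\mu$ be smooth positive functions on $e^k$ (possibly discontinuous across element interfaces), $Z_s=\sqrt{\rho\mu}$. Let $v,\sigma$ be functions that are smooth on each $e^k\times[0,\infty)$, possibly two-valued at interior nodes; denote by a superscript $k$ and arguments $x_k^+$, $x_{k+1}^-$ the one-sided traces taken from element $e^k$. Fix $r_0,r_L\in[-1,1]$ and, for each interior node $x_k$ ($2\le k\le K$), a frictional strength $\alpha_k\in[0,\infty]$. Define boundary/interface data (''hat-variables'') as follows. (i) At $x_1=0$: $p_0=\frac12(Z_s(x_1^+)v(x_1^+)+\sigma(x_1^+))$, $\widehat v(x_1^+)=\frac{1+r_0}{Z_s(x_1^+)}p_0$, $\widehat\sigma(x_1^+)=(1-r_0)p_0$. (ii) At $x_{K+1}=L$: $q_L=\frac12(Z_s(x_{K+1}^-)v(x_{K+1}^-)-\sigma(x_{K+1}^-))$, $\widehat v(x_{K+1}^-)=\frac{1+r_L}{Z_s(x_{K+1}^-)}q_L$, $\widehat\sigma(x_{K+1}^-)=-(1-r_L)q_L$. (iii) At an interior node $x_k$: with $Z^-=Z_s(x_k^-)$, $Z^+=Z_s(x_k^+)$, $q^-=\frac12(Z^-v(x_k^-)-\sigma(x_k^-))$, $p^+=\frac12(Z^+v(x_k^+)+\sigma(x_k^+))$, $\eta_k=\frac{Z^-Z^+}{Z^-+Z^+}$, $\Phi_k=\eta_k(\frac{2}{Z^+}p^+-\frac{2}{Z^-}q^-)$, set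 $\widehat\sigma_k=\frac{\alpha_k}{\eta_k+\alpha_k}\Phi_k$ (and $\widehat\sigma_k=\Phi_k$ if $\alpha_k=\infty$), $\widehat\sigma(x_k^\pm)=\widehat\sigma_k$, $\widehat v(x_k^-)=\frac{2q^-+\widehat\sigma_k}{Z^-}$, $\widehat v(x_k^+)=\frac{2p^+-\widehat\sigma_k}{Z^+}$. Define the flux fluctuations $$F(x_k,t)=\tfrac{Z_s(x_k^+)}{2}\big(v(x_k^+)-\widehat v(x_k^+)\big)-\tfrac12\big(\sigma(x_k^+)-\widehat\sigma(x_k^+)\big),$$ $$G(x_{k+1},t)=\tfrac{Z_s(x_{k+1}^-)}{2}\big(v(x_{k+1}^-)-\widehat v(x_{k+1}^-)\big)+\tfrac12\big(\sigma(x_{k+1}^-)-\widehat\sigma(x_{k+1}^-)\big).$$ Suppose that for all test functions $\phi_v,\phi_\sigma$ which are smooth on each element, $$\sum_{k=1}^K\Big(\int_{x_k}^{x_{k+1}}\big(\rho\phi_v\partial_tv-\phi_v\partial_x\sigma\big)dx+\phi_v(x_k^+)F(x_k,t)+\phi_v(x_{k+1}^-)G(x_{k+1},t)\Big)=0,$$ $$\sum_{k=1}^K\Big(\int_{x_k}^{x_{k+1}}\big(\tfrac1\mu\phi_\sigma\partial_t\sigma-\phi_\sigma\partial_xv\big)dx-\frac{\phi_\sigma(x_k^+)}{Z_s(x_k^+)}F(x_k,t)+\frac{\phi_\sigma(x_{k+1}^-)}{Z_s(x_{k+1}^-)}G(x_{k+1},t)\Big)=0.$$ Then, with $E(t)=\sum_{k=1}^K\frac12\int_{x_k}^{x_{k+1}}\big(\rho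 v^2+\frac1\mu\sigma^2\big)dx$, $$\frac{dE}{dt}=-\sum_{k=1}^K\Big(\frac{|F(x_k,t)|^2}{Z_s(x_k^+)}+\frac{|G(x_{k+1},t)|^2}{Z_s(x_{k+1}^-)}\Big)-\sum_{k=2}^K\frac{\alpha_k}{(\eta_k+\alpha_k)^2}\Phi_k^2-\frac{1-r_0^2}{Z_s(x_1^+)}p_0^2-\frac{1-r_L^2}{Z_s(x_{K+1}^-)}q_L^2,$$ where the term $\frac{\alpha_k}{(\eta_k+\alpha_k)^2}\Phi_k^2$ is interpreted as $0$ when $\alpha_k=\infty$. In particular $\frac{dE}{dt}\le0$.
   Context: This concerns the 1D elastic wave equation $\rho\partial_tv=\partial_x\sigma$, $\frac1\mu\partial_t\sigma=\partial_xv$ on $[0,L]$ written in a penalized weak form on a partition into elements. $Z_s=\sqrt{\rho\mu}$ is the shear impedance. The interior nodes carry frictional interface conditions (force balance and $\widehat\sigma=\alpha_k[\![\widehat v]\!]$), $\alpha_k=\infty$ meaning a locked (non-slipping) interface; the external boundaries carry the conditions $\frac{Z_s}{2}(1-r)v\mp\frac{1+r}{2}\sigma=0$ with reflection coefficients $r_0,r_L$. *)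

(* Defs.v *)
From Stdlib Require Import Reals Lra Arith ClassicalEpsilon.
Open Scope R_scope.

(** Riemann integral of f over [a,b] (0 if f is not Riemann integrable;
    all integrands in the theorem are continuous, hence integrable). *)
Definition Rint (f : R -> R) (a b : R) : R :=
  match excluded_middle_informative (inhabited (Riemann_integrable f a b)) with
  | left H => RiemannInt (epsilon H (fun _ => True))
  | right _ => 0
  end.

(** The derivative of g at y (0 if g is not differentiable at y). *)
Definition Deriv (g : R -> R) (y : R) : R :=
  match excluded_middle_informative (exists l, derivable_pt_lim g y l) with
  | left H => proj1_sig (constructive_indefinite_description _ H)
  | right _ => 0
  end.

Definition smooth1 (f : R -> R) : Prop :=
  exists D : nat -> R -> R, D O = f /\
    forall (n : nat) (y : R), derivable_pt_lim (D n) y (D (S n) y).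

Definition cont2 (g : R -> R -> R) (y t : R) : Prop :=
  forall eps, 0 < eps -> exists delta, 0 < delta /\
    forall y' t', Rabs (y' - y) < delta -> Rabs (t' - t) < delta ->
      Rabs (g y' t' - g y t) < eps.

(** C^infinity functions of two real variables (x,t): all partial derivatives
    D i j = d^i/dx^i d^j/dt^j f exist and are jointly continuous. *)
Definition smooth2 (f : R -> R -> R) : Prop :=
  exists D : nat -> nat -> R -> R -> R, D O O = f /\
    forall (i j : nat) (y t : R),
      derivable_pt_lim (fun z => D i j z t) y (D (S i) j y t) /\
      derivable_pt_lim (fun s => D i j y s) t (D i (S j) y t) /\
      cont2 (D i j) y t.

(** Finite sums: rsum n f = f 0 + ... + f (n-1);
    ssum a b f = sum_{k=a}^{b} f k (empty if b < a). *)
Fixpoint rsum (n : nat) (f : nat -> R) : R :=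
  match n with
  | O => 0
  | S m => rsum m f + f m
  end.

Definition ssum (a b : nat) (f : nat -> R) : R :=
  rsum (b + 1 - a) (fun i => f (a + i)%nat).

(** Frictional strength in [0, +infinity]: RInf means a locked interface. *)
Inductive Rinf : Type :=
  | RFin : R -> Rinf
  | RInf : Rinf.

Definition strength_nonneg (a : Rinf) : Prop :=
  match a with RFin a => 0 <= a | RInf => True end.

(** Every definition below takes the same parameters:
   K (number of elements), r0 rL (reflection coefficients), alpha (strengths at
   interior nodes), x (nodes x 1 < ... < x (K+1)), rho mu (material functions of
   element k), v sig (velocity / stress on element k, functions of (x,t)).
   Traces: v k (x k) t is v(x_k^+) and v k (x (k+1)) t is v(x_{k+1}^-),
   both taken from element e^k = [x k, x (k+1)]. *)

Section Data.
Variables (K : nat) (r0 rL : R) (alpha : nat -> Rinf) (x : nat -> R)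
  (rho mu : nat -> R -> R) (v sig : nat -> R -> R -> R).

Definition Zs (k : nat) (y : R) : R := sqrt (rho k y * mu k y).

(** Interior node k (2 <= k <= K), between elements k-1 and k. *)
Definition Zm (k : nat) : R := Zs (k - 1) (x k).
Definition Zp (k : nat) : R := Zs k (x k).
Definition qm (k : nat) (t : R) : R :=
  / 2 * (Zm k * v (k - 1) (x k) t - sig (k - 1) (x k) t).
Definition pp (k : nat) (t : R) : R :=
  / 2 * (Zp k * v k (x k) t + sig k (x k) t).
Definition eta (k : nat) : R := Zm k * Zp k / (Zm k + Zp k).
Definition Phi (k : nat) (t : R) : R :=
  eta k * (2 / Zp k * pp k t - 2 / Zm k * qm k t).
Definition shat_node (k : nat) (t : R) : R :=
  match alpha k with
  | RFin a => a / (eta k + a) * Phi k t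
  | RInf => Phi k t
  end.
Definition diss_node (k : nat) (t : R) : R :=
  match alpha k with
  | RFin a => a / (eta k + a) ^ 2 * (Phi k t) ^ 2
  | RInf => 0
  end.

Definition p0 (t : R) : R := / 2 * (Zs 1 (x 1) * v 1 (x 1) t + sig 1 (x 1) t).
Definition qL (t : R) : R :=
  / 2 * (Zs K (x (K + 1)) * v K (x (K + 1)) t - sig K (x (K + 1)) t).

Definition vhat_plus (k : nat) (t : R) : R :=
  if Nat.eqb k 1 then (1 + r0) / Zs 1 (x 1) * p0 t
  else (2 * pp k t - shat_node k t) / Zp k.
Definition shat_plus (k : nat) (t : R) : R :=
  if Nat.eqb k 1 then (1 - r0) * p0 t else shat_node k t.

Definition vhat_minus (k : nat) (t : R) : R :=
  if Nat.eqb k K then (1 + rL) / Zs K (x (K + 1)) * qL t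
  else (2 * qm (k + 1) t + shat_node (k + 1) t) / Zm (k + 1).
Definition shat_minus (k : nat) (t : R) : R :=
  if Nat.eqb k K then - ((1 - rL) * qL t) else shat_node (k + 1) t.

Definition Fflux (k : nat) (t : R) : R :=
  Zs k (x k) / 2 * (v k (x k) t - vhat_plus k t)
  - / 2 * (sig k (x k) t - shat_plus k t).
Definition Gflux (k : nat) (t : R) : R :=
  Zs k (x (k + 1)) / 2 * (v k (x (k + 1)) t - vhat_minus k t)
  + / 2 * (sig k (x (k + 1)) t - shat_minus k t).

(** Weak-form residuals for test functions phiv, phis (phi k = restriction to e^k). *)
Definition weak_v (phiv : nat -> R -> R) (t : R) : R :=
  ssum 1 K (fun k =>
    Rint (fun y => rho k y * phiv k y * Deriv (fun s => v k y s) t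
                   - phiv k y * Deriv (fun z => sig k z t) y) (x k) (x (k + 1))
    + phiv k (x k) * Fflux k t + phiv k (x (k + 1)) * Gflux k t).
Definition weak_sig (phis : nat -> R -> R) (t : R) : R :=
  ssum 1 K (fun k =>
    Rint (fun y => / mu k y * phis k y * Deriv (fun s => sig k y s) t
                   - phis k y * Deriv (fun z => v k z t) y) (x k) (x (k + 1))
    - phis k (x k) / Zs k (x k) * Fflux k t
    + phis k (x (k + 1)) / Zs k (x (k + 1)) * Gflux k t).

Definition Energy (t : R) : R :=
  ssum 1 K (fun k => / 2 * Rint (fun y => rho k y * (v k y t) ^ 2
                                     + / mu k y * (sig k y t) ^ 2) (x k) (x (k + 1))).

Definition energy_rate (t : R) : R :=
  - ssum 1 K (fun k => (Fflux k t) ^ 2 / Zs k (x k)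
                       + (Gflux k t) ^ 2 / Zs k (x (k + 1)))
  - ssum 2 K (fun k => diss_node k t)
  - (1 - r0 ^ 2) / Zs 1 (x 1) * (p0 t) ^ 2
  - (1 - rL ^ 2) / Zs K (x (K + 1)) * (qL t) ^ 2.

End Data.

(* Main.v *)
Require Import Defs.
From Stdlib Require Import Reals.
Open Scope R_scope.
From Stdlib Require Import Lra Lia ClassicalEpsilon Morphisms Setoid FunctionalExtensionality.

Module Ana.
From Coquelicot Require Import Coquelicot.

Lemma Deriv_eq g y l : derivable_pt_lim g y l -> Deriv g y = l.
Proof.
  intro H. unfold Deriv.
  destruct (excluded_middle_informative _) as [H1|H1].
  - destruct (constructive_indefinite_description _ _) as [l' Hl']. simpl.
    eapply uniqueness_limite; eauto.
  - exfalso; apply H1; eauto.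
Qed.

Lemma Rint_RInt f a b : ex_RInt f a b -> Rint f a b = RInt f a b.
Proof.
  intro H. unfold Rint.
  destruct (excluded_middle_informative _) as [H1|H1].
  - rewrite (RInt_Reals f a b (epsilon H1 (fun _ => True))). reflexivity.
  - exfalso; apply H1; constructor; now apply ex_RInt_Reals_0.
Qed.

Lemma cont_dpl f y l : derivable_pt_lim f y l -> continuous f y.
Proof. intro H. apply (@ex_derive_continuous R_AbsRing R_NormedModule f y). exists l. now apply is_derive_Reals. Qed.

Lemma cont2_2d g y t : cont2 g y t -> continuity_2d_pt (fun u w => g w u) t y.
Proof.
  intros H eps. destruct (H eps (cond_pos eps)) as [d [Hd Hd']].
  exists (mkposreal d Hd). simpl. intros u w Hu Hw. apply Hd'; auto.
Qed.

Lemma cont_1d_2d f y t : continuous f y -> continuity_2d_pt (fun u w => f w) t y.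
Proof.
  intro H. apply (continuity_1d_2d_pt_comp f (fun u w => w)).
  - now apply continuity_pt_filterlim.
  - apply continuity_2d_pt_id2.
Qed.

#[export] Instance Rint_proper : Proper (pointwise_relation R eq ==> eq ==> eq ==> eq) Rint.
Proof.
  intros f g H a a' <- b b' <-. f_equal. now apply functional_extensionality.
Qed.
#[export] Instance RInt_proper : Proper (pointwise_relation R eq ==> eq ==> eq ==> eq) (@RInt R_CompleteNormedModule).
Proof.
  intros f g H a a' <- b b' <-. f_equal. now apply functional_extensionality.
Qed.

Lemma cmul (f g : R -> R) x : continuous f x -> continuous g x -> continuous (fun y => f y * g y) x.
Proof. intros; apply (@continuous_mult R_UniformSpace R_AbsRing f g x); auto. Qed.
Lemma cplus (f g : R -> R) x : continuous f x -> continuous g x -> continuous (fun y => f y + g y) x.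
Proof. intros; apply (@continuous_plus R_UniformSpace R_AbsRing R_NormedModule f g x); auto. Qed.
Lemma cminus (f g : R -> R) x : continuous f x -> continuous g x -> continuous (fun y => f y - g y) x.
Proof. intros; apply (@continuous_minus R_UniformSpace R_AbsRing R_NormedModule f g x); auto. Qed.
Lemma csq (f : R -> R) x : continuous f x -> continuous (fun y => f y ^ 2) x.
Proof.
  intros H. apply (continuous_ext (fun y => f y * f y)). intro; simpl; ring.
  now apply cmul.
Qed.
Lemma exRc (f : R -> R) a b : (forall z, Rmin a b <= z <= Rmax a b -> continuous f z) -> ex_RInt f a b.
Proof. intro H. apply (@ex_RInt_continuous R_CompleteNormedModule). exact H. Qed.

Lemma is_derive_eqv (f : R -> R) x l l' : is_derive f x l -> l = l' -> is_derive f x l'.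
Proof. intros H <-; exact H. Qed.
Lemma RInt_scal' (f : R -> R) a b l : ex_RInt f a b -> RInt (fun x => l * f x) a b = l * RInt f a b.
Proof. intro H. exact (@RInt_scal R_CompleteNormedModule f a b l H). Qed.
Lemma RInt_plus' (f g : R -> R) a b : ex_RInt f a b -> ex_RInt g a b ->
  RInt (fun x => f x + g x) a b = RInt f a b + RInt g a b.
Proof. intros H1 H2. exact (@RInt_plus R_CompleteNormedModule f g a b H1 H2). Qed.
Lemma exRplus (f g : R -> R) a b : ex_RInt f a b -> ex_RInt g a b -> ex_RInt (fun x => f x + g x) a b.
Proof. intros H1 H2. exact (@ex_RInt_plus R_NormedModule f g a b H1 H2). Qed.

Lemma elem (rho mu : R -> R) (v sig : R -> R -> R) (a b t : R) :
  a < b -> smooth1 rho -> smooth1 mu -> (forall y, a <= y <= b -> 0 < mu y) ->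
  smooth2 v -> smooth2 sig ->
  derivable_pt_lim (fun s => / 2 * Rint (fun y => rho y * (v y s) ^ 2 + / mu y * (sig y s) ^ 2) a b) t
   (Rint (fun y => rho y * v y t * Deriv (fun s => v y s) t - v y t * Deriv (fun z => sig z t) y) a b
    + Rint (fun y => / mu y * sig y t * Deriv (fun s => sig y s) t - sig y t * Deriv (fun z => v z t) y) a b
    + (v b t * sig b t - v a t * sig a t)).
Proof.
  intros Hab [Dr [Dr0 HDr]] [Dm [Dm0 HDm]] Hmu [Dv [Dv0 HDv]] [Ds [Ds0 HDs]].
  subst rho mu v sig.
  assert (Hmin : Rmin a b = a) by (apply Rmin_left; lra).
  assert (Hmax : Rmax a b = b) by (apply Rmax_right; lra).
  assert (cr : forall y, continuous (Dr 0%nat) y) by (intro y; eapply cont_dpl; apply HDr).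
  assert (cm : forall y, continuous (Dm 0%nat) y) by (intro y; eapply cont_dpl; apply HDm).
  assert (cv : forall i j s y, continuous (fun z => Dv i j z s) y) by
    (intros; eapply cont_dpl; apply HDv).
  assert (cs : forall i j s y, continuous (fun z => Ds i j z s) y) by
    (intros; eapply cont_dpl; apply HDs).
  assert (cim : forall y, a <= y <= b -> continuous (fun z => / Dm 0%nat z) y).
  { intros y Hy. apply continuous_Rinv_comp; auto. specialize (Hmu y Hy); lra. }
  assert (d1 : forall y, Deriv (fun s => Dv 0%nat 0%nat y s) t = Dv 0%nat 1%nat y t)
    by (intro; apply Deriv_eq, HDv).
  assert (d2 : forall y, Deriv (fun s => Ds 0%nat 0%nat y s) t = Ds 0%nat 1%nat y t)
    by (intro; apply Deriv_eq, HDs).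
  assert (d3 : forall y, Deriv (fun z => Dv 0%nat 0%nat z t) y = Dv 1%nat 0%nat y t)
    by (intro; apply Deriv_eq, HDv).
  assert (d4 : forall y, Deriv (fun z => Ds 0%nat 0%nat z t) y = Ds 1%nat 0%nat y t)
    by (intro; apply Deriv_eq, HDs).
  setoid_rewrite d1. setoid_rewrite d2. setoid_rewrite d3. setoid_rewrite d4.
  set (V := Dv 0%nat 0%nat) in *. set (S := Ds 0%nat 0%nat) in *.
  set (r := Dr 0%nat) in *. set (m := Dm 0%nat) in *.
  set (f := fun u y => r y * V y u ^ 2 + / m y * S y u ^ 2).
  assert (exf : forall u, ex_RInt (fun y => f u y) a b).
  { intro u. apply exRc. rewrite Hmin, Hmax. intros z Hz. unfold f.
    apply cplus; apply cmul.
    - apply cr.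
    - apply csq, cv.
    - apply cim; exact Hz.
    - apply csq, cs. }
  set (g := fun u y => 2 * (r y * V y u * Dv 0%nat 1%nat y u) + 2 * (/ m y * S y u * Ds 0%nat 1%nat y u)).
  assert (Hdf : forall u y, is_derive (fun z => f z y) u (g u y)).
  { intros u y.
    assert (hv : is_derive (fun s => V y s) u (Dv 0%nat 1%nat y u))
      by (apply is_derive_Reals, HDv).
    assert (hs : is_derive (fun s => S y s) u (Ds 0%nat 1%nat y u))
      by (apply is_derive_Reals, HDs).
    assert (H1 := is_derive_scal _ _ (r y) _ (is_derive_pow _ 2 _ _ hv)).
    assert (H2 := is_derive_scal _ _ (/ m y) _ (is_derive_pow _ 2 _ _ hs)).
    assert (H3 := @is_derive_plus R_AbsRing R_NormedModule _ _ _ _ _ H1 H2).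
    eapply is_derive_eqv; [exact H3|]. unfold g, plus; simpl. ring. }
  assert (Df : forall u y, Derive (fun z => f z y) u = g u y)
    by (intros; apply is_derive_unique, Hdf).
  assert (HP : is_derive (fun u => RInt (fun y => f u y) a b) t
                 (RInt (fun y => Derive (fun u => f u y) t) a b)).
  { apply (is_derive_RInt_param f a b t).
    - apply filter_forall. intros u y _. exists (g u y). apply Hdf.
    - intros y Hy. rewrite Hmin, Hmax in Hy.
      apply continuity_2d_pt_ext with (f := g). { intros; symmetry; apply Df. }
      unfold g.
      assert (c1 := cont_1d_2d _ y t (cr y)).
      assert (c2 := cont_1d_2d _ y t (cim y Hy)).
      assert (c3 := cont2_2d _ y t (proj2 (proj2 (HDv 0%nat 0%nat y t)))).
      assert (c4 := cont2_2d _ y t (proj2 (proj2 (HDv 0%nat 1%nat y t)))).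
      assert (c5 := cont2_2d _ y t (proj2 (proj2 (HDs 0%nat 0%nat y t)))).
      assert (c6 := cont2_2d _ y t (proj2 (proj2 (HDs 0%nat 1%nat y t)))).
      assert (c0 := continuity_2d_pt_const t y 2).
      repeat first [ apply continuity_2d_pt_plus | apply continuity_2d_pt_mult ].
      all: try first [assumption | apply continuity_2d_pt_const].
    - apply filter_forall. exact exf. }
  set (f1 := fun y => r y * V y t * Dv 0%nat 1%nat y t - V y t * Ds 1%nat 0%nat y t).
  set (f2 := fun y => / m y * S y t * Ds 0%nat 1%nat y t - S y t * Dv 1%nat 0%nat y t).
  set (f3 := fun y => Dv 1%nat 0%nat y t * S y t + V y t * Ds 1%nat 0%nat y t).
  assert (ex1 : ex_RInt f1 a b).
  { apply exRc. rewrite Hmin, Hmax. intros z Hz. unfold f1.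
    apply cminus; repeat apply cmul; first [apply cr | apply cv | apply cs]. }
  assert (ex2 : ex_RInt f2 a b).
  { apply exRc. rewrite Hmin, Hmax. intros z Hz. unfold f2.
    apply cminus; repeat apply cmul; first [apply cim; exact Hz | apply cv | apply cs]. }
  assert (ex3 : ex_RInt f3 a b).
  { apply exRc. rewrite Hmin, Hmax. intros z Hz. unfold f3.
    apply cplus; repeat apply cmul; first [apply cv | apply cs]. }
  assert (I3 : RInt f3 a b = V b t * S b t - V a t * S a t).
  { apply is_RInt_unique.
    apply (@is_RInt_derive R_CompleteNormedModule (fun y => V y t * S y t) f3 a b).
    - intros z _. unfold f3.
      apply (@is_derive_mult R_AbsRing (fun y => V y t) (fun y => S y t)).
      + apply is_derive_Reals, HDv.
      + apply is_derive_Reals, HDs.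
      + intros; apply Rmult_comm.
    - intros z _. unfold f3. apply cplus; apply cmul; first [apply cv | apply cs]. }
  change (fun y => r y * V y t * Dv 0%nat 1%nat y t - V y t * Ds 1%nat 0%nat y t) with f1.
  change (fun y => / m y * S y t * Ds 0%nat 1%nat y t - S y t * Dv 1%nat 0%nat y t) with f2.
  rewrite (Rint_RInt _ _ _ ex1), (Rint_RInt _ _ _ ex2).
  apply is_derive_Reals.
  apply is_derive_ext with (f := fun s => / 2 * RInt (fun y => f s y) a b).
  { intro s. f_equal. symmetry. exact (Rint_RInt _ _ _ (exf s)). }
  eapply is_derive_eqv; [apply is_derive_scal, HP|].
  setoid_rewrite Df.
  rewrite <- I3.
  transitivity (/ 2 * RInt (fun y => 2 * (f1 y + f2 y + f3 y)) a b).
  { apply f_equal. apply RInt_ext. intros z _. unfold g, f1, f2, f3. lazymatch goal with |- ?A = ?B => change (@eq R A B) end; ring. }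
  rewrite RInt_scal' by (apply exRplus; [apply exRplus|]; assumption).
  rewrite RInt_plus' by (first [assumption | apply exRplus; assumption]).
  rewrite RInt_plus' by assumption.
  lazymatch goal with |- ?A = ?B => change (@eq R A B) end; field.
Qed.

End Ana.
Set Bullet Behavior "Strict Subproofs".


Lemma rsum_ext n f g : (forall i, (i < n)%nat -> f i = g i) -> rsum n f = rsum n g.
Proof.
  induction n; intro H; simpl; auto.
  rewrite IHn by (intros; apply H; lia). rewrite H by lia. reflexivity.
Qed.

Lemma rsum_plus n f g : rsum n (fun i => f i + g i) = rsum n f + rsum n g.
Proof. induction n; simpl; [ring| rewrite IHn; ring]. Qed.

Lemma rsum_lin n f g : rsum n (fun i => - f i - g i) = - rsum n f - rsum n g.
Proof. induction n; simpl; [ring| rewrite IHn; ring]. Qed.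

Lemma rsum_nonneg n f : (forall i, (i < n)%nat -> 0 <= f i) -> 0 <= rsum n f.
Proof.
  induction n; intro H; simpl; [lra|].
  assert (0 <= rsum n f) by (apply IHn; intros; apply H; lia).
  assert (0 <= f n) by (apply H; lia). lra.
Qed.

Lemma rsum_regroup n A B : (1 <= n)%nat ->
  rsum n (fun i => A (1 + i)%nat + B (1 + i)%nat) =
  A 1%nat + B n + rsum (n - 1) (fun i => B (1 + i)%nat + A (2 + i)%nat).
Proof.
  induction n as [|n IH]; intro H; [lia|].
  destruct n as [|n].
  - simpl. ring.
  - change (rsum (S (S n)) (fun i => A (1 + i)%nat + B (1 + i)%nat)) with
      (rsum (S n) (fun i => A (1 + i)%nat + B (1 + i)%nat) + (A (1 + S n)%nat + B (1 + S n)%nat)).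
    rewrite IH by lia.
    replace (S (S n) - 1)%nat with (S n) by lia. replace (S n - 1)%nat with n by lia.
    simpl rsum at 2. replace (1 + n)%nat with (S n) by lia.
    replace (2 + n)%nat with (1 + S n)%nat by lia. replace (1 + S n)%nat with (S (S n)) by lia.
    simpl. ring.
Qed.

Lemma derivable_rsum n (g : nat -> R -> R) d t :
  (forall i, (i < n)%nat -> derivable_pt_lim (g i) t (d i)) ->
  derivable_pt_lim (fun s => rsum n (fun i => g i s)) t (rsum n d).
Proof.
  induction n; intro H; simpl.
  - apply derivable_pt_lim_const.
  - apply (derivable_pt_lim_plus (fun s => rsum n (fun i => g i s)) (g n)).
    + apply IHn; intros; apply H; lia.
    + apply H; lia.
Qed.

Section M.
Variables (K : nat) (r0 rL : R) (alpha : nat -> Rinf) (x : nat -> R)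
  (rho mu : nat -> R -> R) (v sig : nat -> R -> R -> R) (t : R).
Local Notation F k := (Fflux r0 alpha x rho mu v sig k t).
Local Notation G k := (Gflux K rL alpha x rho mu v sig k t).
Local Notation Z := (Zs rho mu).

Definition Ln k := - (v k (x k) t * sig k (x k) t) - v k (x k) t * F k + sig k (x k) t / Z k (x k) * F k.
Definition Rn k := v k (x (k+1)%nat) t * sig k (x (k+1)%nat) t - v k (x (k+1)%nat) t * G k
   - sig k (x (k+1)%nat) t / Z k (x (k+1)%nat) * G k.

Lemma node1 : 0 < Z 1%nat (x 1%nat) ->
  Ln 1 = - (F 1%nat ^ 2 / Z 1%nat (x 1%nat)) - (1 - r0 ^ 2) / Z 1%nat (x 1%nat) * p0 x rho mu v sig t ^ 2.
Proof.
  intro H. unfold Ln, Fflux, vhat_plus, shat_plus, p0. simpl Nat.eqb. cbv iota.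
  field. lra.
Qed.

Lemma nodeK : 0 < Z K (x (K + 1)%nat) ->
  Rn K = - (G K ^ 2 / Z K (x (K + 1)%nat)) - (1 - rL ^ 2) / Z K (x (K + 1)%nat) * qL K x rho mu v sig t ^ 2.
Proof.
  intro H. unfold Rn, Gflux, vhat_minus, shat_minus, qL. rewrite Nat.eqb_refl.
  field. lra.
Qed.

Lemma nodei k : (2 <= k <= K)%nat -> 0 < Z (k - 1)%nat (x k) -> 0 < Z k (x k) ->
  strength_nonneg (alpha k) ->
  Rn (k - 1) + Ln k = - (G (k - 1)%nat ^ 2 / Z (k - 1)%nat (x (k - 1 + 1)%nat) + F k ^ 2 / Z k (x k))
     - diss_node alpha x rho mu v sig k t.
Proof.
  intros Hk Hm Hp Ha.
  assert (E : (k - 1 + 1 = k)%nat) by lia.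
  assert (E1 : Nat.eqb (k - 1) K = false) by (apply Nat.eqb_neq; lia).
  assert (E2 : Nat.eqb k 1 = false) by (apply Nat.eqb_neq; lia).
  unfold Rn, Ln, Gflux, Fflux, vhat_minus, shat_minus, vhat_plus, shat_plus.
  rewrite E1, E2, E.
  unfold shat_node, diss_node, Phi, eta, qm, pp, Zm, Zp.
  unfold strength_nonneg in Ha.
  destruct (alpha k) as [a|].
  - assert (0 < Z (k-1)%nat (x k) * Z k (x k) / (Z (k-1)%nat (x k) + Z k (x k))).
    { apply Rdiv_lt_0_compat; nra. }
    field. repeat split; try lra.
    all: nra.
  - field. lra.
Qed.

Definition Asq k := F k ^ 2 / Z k (x k).
Definition Bsq k := G k ^ 2 / Z k (x (k + 1)%nat).

Lemma rate_eq : (1 <= K)%nat ->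
  energy_rate K r0 rL alpha x rho mu v sig t =
  - (Asq 1%nat + Bsq K + rsum (K - 1) (fun i => Bsq (1 + i)%nat + Asq (2 + i)%nat))
  - rsum (K - 1) (fun i => diss_node alpha x rho mu v sig (2 + i)%nat t)
  - (1 - r0 ^ 2) / Z 1%nat (x 1%nat) * (p0 x rho mu v sig t) ^ 2
  - (1 - rL ^ 2) / Z K (x (K + 1)%nat) * (qL K x rho mu v sig t) ^ 2.
Proof.
  intro HK. unfold energy_rate, ssum.
  replace (K + 1 - 1)%nat with K by lia. replace (K + 1 - 2)%nat with (K - 1)%nat by lia.
  rewrite <- (rsum_regroup K Asq Bsq HK). reflexivity.
Qed.
End M.

Theorem theorem1
  (K : nat) (L r0 rL : R) (alpha : nat -> Rinf) (x : nat -> R)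
  (rho mu : nat -> R -> R) (v sig : nat -> R -> R -> R)
  (HK : (1 <= K)%nat)
  (Hx1 : x 1%nat = 0) (HxL : x (K + 1)%nat = L)
  (Hx : forall k : nat, (1 <= k <= K)%nat -> x k < x (k + 1)%nat)
  (Hrho_s : forall k : nat, (1 <= k <= K)%nat -> smooth1 (rho k))
  (Hmu_s : forall k : nat, (1 <= k <= K)%nat -> smooth1 (mu k))
  (Hrho_p : forall k : nat, (1 <= k <= K)%nat ->
     forall y, x k <= y <= x (k + 1)%nat -> 0 < rho k y)
  (Hmu_p : forall k : nat, (1 <= k <= K)%nat ->
     forall y, x k <= y <= x (k + 1)%nat -> 0 < mu k y)
  (Hv_s : forall k : nat, (1 <= k <= K)%nat -> smooth2 (v k))
  (Hsig_s : forall k : nat, (1 <= k <= K)%nat -> smooth2 (sig k))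
  (Hr0 : -1 <= r0 <= 1) (HrL : -1 <= rL <= 1)
  (Halpha : forall k : nat, (2 <= k <= K)%nat -> strength_nonneg (alpha k))
  (Hweak : forall t : R, 0 <= t ->
     forall phiv phis : nat -> R -> R,
       (forall k : nat, (1 <= k <= K)%nat -> smooth1 (phiv k) /\ smooth1 (phis k)) ->
       weak_v K r0 rL alpha x rho mu v sig phiv t = 0 /\
       weak_sig K r0 rL alpha x rho mu v sig phis t = 0) :
  forall t : R, 0 <= t ->
    derivable_pt_lim (Energy K x rho mu v sig) t
      (energy_rate K r0 rL alpha x rho mu v sig t) /\
    energy_rate K r0 rL alpha x rho mu v sig t <= 0.
Proof.
  intros t Ht.
  assert (Zpos : forall k, (1 <= k <= K)%nat -> forall y, x k <= y <= x (k + 1)%nat ->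
            0 < Zs rho mu k y).
  { intros k Hk y Hy. unfold Zs. apply sqrt_lt_R0. apply Rmult_lt_0_compat; auto. }
  assert (Zl : forall k, (1 <= k <= K)%nat -> 0 < Zs rho mu k (x k)).
  { intros k Hk. apply Zpos; auto. specialize (Hx k Hk). lra. }
  assert (Zr : forall k, (1 <= k <= K)%nat -> 0 < Zs rho mu k (x (k + 1)%nat)).
  { intros k Hk. apply Zpos; auto. specialize (Hx k Hk). lra. }
  assert (Zm' : forall k, (2 <= k <= K)%nat -> 0 < Zs rho mu (k - 1)%nat (x k)).
  { intros k Hk. replace (x k) with (x (k - 1 + 1)%nat) by (f_equal; lia). apply Zr; lia. }
  assert (Hsm : forall (w : nat -> R -> R -> R), (forall k, (1 <= k <= K)%nat -> smooth2 (w k)) ->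
            forall k, (1 <= k <= K)%nat -> smooth1 (fun y => w k y t)).
  { intros w Hw k Hk. destruct (Hw k Hk) as [D [D0 HD]].
    exists (fun n y => D n 0%nat y t). split.
    - rewrite D0. reflexivity.
    - intros n y. apply HD. }
  destruct (Hweak t Ht (fun k y => v k y t) (fun k y => sig k y t)) as [W1 W2].
  { intros k Hk. split; apply Hsm; auto. }
  unfold weak_v, weak_sig, ssum in W1, W2.
  replace (K + 1 - 1)%nat with K in W1, W2 by lia.
  cbv beta in W1, W2.
  match type of W1 with rsum _ ?w = 0 => set (w1 := w) in W1 end.
  match type of W2 with rsum _ ?w = 0 => set (w2 := w) in W2 end.
  set (dd := fun i : nat =>
    Rint (fun y => rho (1 + i)%nat y * v (1 + i)%nat y t * Deriv (fun s => v (1 + i)%nat y s) t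
                   - v (1 + i)%nat y t * Deriv (fun z => sig (1 + i)%nat z t) y) (x (1 + i)%nat) (x (1 + i + 1)%nat)
    + Rint (fun y => / mu (1 + i)%nat y * sig (1 + i)%nat y t * Deriv (fun s => sig (1 + i)%nat y s) t
                   - sig (1 + i)%nat y t * Deriv (fun z => v (1 + i)%nat z t) y) (x (1 + i)%nat) (x (1 + i + 1)%nat)
    + (v (1 + i)%nat (x (1 + i + 1)%nat) t * sig (1 + i)%nat (x (1 + i + 1)%nat) t
       - v (1 + i)%nat (x (1 + i)%nat) t * sig (1 + i)%nat (x (1 + i)%nat) t)).
  assert (HD : derivable_pt_lim (Energy K x rho mu v sig) t (rsum K dd)).
  { unfold Energy, ssum. replace (K + 1 - 1)%nat with K by lia.
    apply (derivable_rsum K (fun i s => / 2 * Rint (fun y => rho (1 + i)%nat y * (v (1 + i)%nat y s) ^ 2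
              + / mu (1 + i)%nat y * (sig (1 + i)%nat y s) ^ 2) (x (1 + i)%nat) (x (1 + i + 1)%nat))).
    intros i Hi. unfold dd. apply Ana.elem.
    - apply Hx; lia.
    - apply Hrho_s; lia.
    - apply Hmu_s; lia.
    - apply Hmu_p; lia.
    - apply Hv_s; lia.
    - apply Hsig_s; lia. }
  assert (Heq : rsum K dd = energy_rate K r0 rL alpha x rho mu v sig t).
  { transitivity (rsum K (fun i => w1 i + w2 i + (Ln r0 alpha x rho mu v sig t (1 + i)%nat
                                                   + Rn K rL alpha x rho mu v sig t (1 + i)%nat))).
    { apply rsum_ext. intros i Hi. unfold dd, w1, w2, Ln, Rn. ring. }
    rewrite rsum_plus, rsum_plus, W1, W2, Rplus_0_l, Rplus_0_l.
    rewrite (rsum_regroup K (Ln r0 alpha x rho mu v sig t) (Rn K rL alpha x rho mu v sig t) HK).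
    rewrite (rate_eq K r0 rL alpha x rho mu v sig t HK).
    rewrite node1 by (apply Zl; lia).
    rewrite nodeK by (apply Zr; lia).
    rewrite (rsum_ext (K - 1) _ (fun i => - (Bsq K rL alpha x rho mu v sig t (1 + i)%nat
                  + Asq r0 alpha x rho mu v sig t (2 + i)%nat)
                  - diss_node alpha x rho mu v sig (2 + i)%nat t)).
    - rewrite rsum_lin. unfold Asq, Bsq. ring.
    - intros i Hi. unfold Asq, Bsq.
      apply (nodei K r0 rL alpha x rho mu v sig t (2 + i)%nat).
      + lia.
      + apply Zm'; lia.
      + apply Zl; lia.
      + apply Halpha; lia. }
  split.
  - rewrite <- Heq. exact HD.
  - unfold energy_rate, ssum.
    assert (S1 : 0 <= rsum (K + 1 - 1) (fun i => Fflux r0 alpha x rho mu v sig (1 + i) t ^ 2 / Zs rho mu (1 + i) (x (1 + i)%nat)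
               + Gflux K rL alpha x rho mu v sig (1 + i) t ^ 2 / Zs rho mu (1 + i) (x (1 + i + 1)%nat))).
    { apply rsum_nonneg. intros i Hi.
      assert (0 < Zs rho mu (1 + i) (x (1 + i)%nat)) by (apply Zl; lia).
      assert (0 < Zs rho mu (1 + i) (x (1 + i + 1)%nat)) by (apply Zr; lia).
      apply Rplus_le_le_0_compat; unfold Rdiv; apply Rmult_le_pos;
        try apply pow2_ge_0; left; apply Rinv_0_lt_compat; assumption. }
    assert (S2 : 0 <= rsum (K + 1 - 2) (fun i => diss_node alpha x rho mu v sig (2 + i) t)).
    { apply rsum_nonneg. intros i Hi. unfold diss_node.
      assert (Ha := Halpha (2 + i)%nat ltac:(lia)). unfold strength_nonneg in Ha.
      destruct (alpha (2 + i)%nat) as [a|]; [|lra].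
      assert (0 < eta x rho mu (2 + i)%nat).
      { unfold eta, Zm, Zp. assert (0 < Zs rho mu (2 + i - 1)%nat (x (2 + i)%nat)) by (apply Zm'; lia).
        assert (0 < Zs rho mu (2 + i)%nat (x (2 + i)%nat)) by (apply Zl; lia).
        apply Rdiv_lt_0_compat; nra. }
      unfold Rdiv. apply Rmult_le_pos; [apply Rmult_le_pos|apply pow2_ge_0]; [lra|].
      left. apply Rinv_0_lt_compat. apply pow_lt. lra. }
    assert (0 < Zs rho mu 1%nat (x 1%nat)) by (apply Zl; lia).
    assert (0 < Zs rho mu K (x (K + 1)%nat)) by (apply Zr; lia).
    assert (0 <= (1 - r0 ^ 2) / Zs rho mu 1%nat (x 1%nat) * p0 x rho mu v sig t ^ 2).
    { unfold Rdiv. apply Rmult_le_pos; [apply Rmult_le_pos|apply pow2_ge_0]; [nra|].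
      left; apply Rinv_0_lt_compat; assumption. }
    assert (0 <= (1 - rL ^ 2) / Zs rho mu K (x (K + 1)%nat) * qL K x rho mu v sig t ^ 2).
    { unfold Rdiv. apply Rmult_le_pos; [apply Rmult_le_pos|apply pow2_ge_0]; [nra|].
      left; apply Rinv_0_lt_compat; assumption. }
    lra.
Qed.
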